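(* Let $m\ge1$, $n\ge0$ and let $\mu$ be a partition with $\ell(\mu)=n+1$ and $\mu_1<m$. Let $\mu^c$ be the complement of $\mu$ in the rectangle $(m^{n+1})$, i.e. $\mu^c_i=m-\mu_{n+2-i}$ for $1\le i\le n+1$. Then $$f_\mu(q,t)-f_{\mu^c}(q,t)=\frac{1}{1-q}\sum_{j=0}^{n}t^j\big(q^{\mu^c_{n+1-j}}-q^{\mu_{n+1-j}}\big).$$
   Context: For a partition $\nu$, $f_\nu(q,t)=\sum_{x\in\nu}q^{a(x)}t^{l(x)}$, where for a box $x=(r,c)$ of $\nu$ the arm is $a(x)=\nu_r-c$ and the leg is $l(x)=\nu'_c-r$. *)

(* Defs.v *)
From mathcomp Require Import all_boot all_order all_algebra.
Set Implicit Arguments. Unset Strict Implicit. Unset Printing Implicit Defensive.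
Import GRing.Theory.
Local Open Scope ring_scope.

Definition is_partition (s : seq nat) : bool :=
  sorted geq s && all (fun x => (0 < x)%N) s.

(* 1-indexed parts: part nu i = nu_i (0 if i is out of range). *)
Definition part (nu : seq nat) (i : nat) : nat := nth 0%N nu i.-1.

Definition conjpart (nu : seq nat) (c : nat) : nat :=
  count (fun x => (c <= x)%N) nu.

(* f_nu(q,t) = sum over boxes x=(r,c) of nu of q^{a(x)} t^{l(x)},
   a(x) = nu_r - c, l(x) = nu'_c - r. *)
Definition fpoly (R : comRingType) (nu : seq nat) (q t : R) : R :=
  \sum_(1 <= r < (size nu).+1)
    \sum_(1 <= c < (part nu r).+1)
       q ^+ (part nu r - c) * t ^+ (conjpart nu c - r).

Definition complement (m n : nat) (mu : seq nat) : seq nat :=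
  mkseq (fun i => m - part mu (n.+2 - i.+1))%N n.+1.

(* Main.v *)
Require Import Defs.
From mathcomp Require Import all_boot all_order all_algebra.
From mathcomp Require Import zify ring.
Import GRing.Theory.
Local Open Scope ring_scope.

Lemma nth_anti (s : seq nat) : sorted geq s ->
  forall i j, (i <= j)%N -> (nth 0 s j <= nth 0 s i)%N.
Proof.
move=> hs i j hij.
case: (ltnP j (size s)) => hj; last by rewrite nth_default.
have := @sorted_leq_nth nat geq _ _ 0%N s hs i j.
apply.
- by move=> a b c /= h1 h2; exact: leq_trans h2 h1.
- by move=> a /=.
- rewrite inE; exact: leq_ltn_trans hij hj.
- by rewrite inE.
- done.
Qed.

Lemma count_sorted (s : seq nat) (c k : nat) : sorted geq s -> (k <= size s)%N ->
  (0 < k -> c <= nth 0 s k.-1)%N -> (nth 0 s k < c)%N ->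
  count (fun x => c <= x)%N s = k.
Proof.
move=> hs hk h1 h2.
rewrite -(cat_take_drop k s) count_cat.
have -> : count (fun x => c <= x)%N (take k s) = k.
  have : all (fun x => c <= x)%N (take k s).
    apply/(all_nthP 0) => i; rewrite size_takel // => hi.
    rewrite nth_take //; apply: leq_trans (h1 _) _; first by case: k hi {h1 hk h2}.
    apply: nth_anti => //; by case: k hi {h1 hk h2}.
  by rewrite all_count size_takel // => /eqP.
have -> : count (fun x => c <= x)%N (drop k s) = 0%N.
  apply/eqP; rewrite -[_ == 0%N]negbK -lt0n -has_count; apply/hasPn => x /(nthP 0) [i hi <-].
  rewrite nth_drop -ltnNge; apply: leq_ltn_trans _ h2; apply: nth_anti => //; exact: leq_addr.
by rewrite addn0.
Qed.

Lemma chain_anti (p : nat -> nat) a b : (a <= b)%N ->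
  (forall i, (a <= i < b)%N -> (p i.+1 <= p i)%N) -> (p b <= p a)%N.
Proof.
elim: b => [|b IH] hab hm; first by rewrite leqn0 in hab; rewrite (eqP hab).
move: hab; rewrite leq_eqVlt => /orP[/eqP-> //|hlt].
rewrite ltnS in hlt.
have h1 : (p b.+1 <= p b)%N by apply: hm; apply/andP; split; lia.
apply: leq_trans h1 (IH hlt _) => i /andP[h2 h3]; apply: hm; apply/andP; split; lia.
Qed.

Lemma split_blocks (R : zmodType) (p : nat -> nat) (F : nat -> R) a b : (a <= b)%N ->
  (forall i, (a <= i < b)%N -> (p i.+1 <= p i)%N) ->
  \sum_(p b <= c < p a) F c = \sum_(a <= j < b) \sum_(p j.+1 <= c < p j) F c.
Proof.
elim: b => [|b IH] hab hm.
  by rewrite leqn0 in hab; rewrite (eqP hab) !big_geq.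
move: hab; rewrite leq_eqVlt => /orP[/eqP->|hlt]; first by rewrite !big_geq.
rewrite ltnS in hlt.
rewrite big_nat_recr //= -IH //; last by move=> i /andP[h1 h2]; apply: hm; rewrite h1 ltnS ltnW.
rewrite addrC (big_cat_nat _ (n:=p b)) //; first by apply: hm; rewrite hlt leqnn.
by apply: chain_anti => // i /andP[h1 h2]; apply: hm; rewrite h1 ltnS ltnW.
Qed.

Lemma part_anti (s : seq nat) : sorted geq s ->
  forall i j, (0 < i)%N -> (i <= j)%N -> (part s j <= part s i)%N.
Proof. move=> hs i j hi hij; rewrite /part; apply: nth_anti => //; lia. Qed.

Lemma part_out (s : seq nat) i : (size s < i)%N -> part s i = 0%N.
Proof. by move=> h; rewrite /part nth_default //; lia. Qed.

Section Row.
Variable R : comRingType.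
Variables q t : R.

Lemma geom_tel (N a b : nat) (e : nat) : (a <= b <= N)%N ->
  (1 - q) * \sum_(a <= c < b) q ^+ (N - c.+1) * t ^+ e =
  t ^+ e * (q ^+ (N - b) - q ^+ (N - a)).
Proof.
move=> /andP[hab hbN].
rewrite -big_distrl /= mulrA mulrC; congr (_ * _).
rewrite big_distrr /=.
apply: (telescope_sumr_eq (fun c => q ^+ (N - c))) => // c /andP[h1 h2].
have -> : (N - c = (N - c.+1).+1)%N by lia.
by rewrite exprS mulrBl mul1r mulrC.
Qed.

Lemma row_lemma (nu : seq nat) (r : nat) : sorted geq nu ->
  (1 <= r <= size nu)%N ->
  (1 - q) * \sum_(1 <= c < (part nu r).+1)
       q ^+ (part nu r - c) * t ^+ (conjpart nu c - r) =
  \sum_(r <= k < (size nu).+1)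
       t ^+ (k - r) * (q ^+ (part nu r - part nu k) - q ^+ (part nu r - part nu k.+1)).
Proof.
move=> hs /andP[hr hrL].
rewrite big_add1 /=.
have E : part nu (size nu).+1 = 0%N by apply: part_out.
have key := @split_blocks R (part nu)
   (fun c => q ^+ (part nu r - c.+1) * t ^+ (conjpart nu c.+1 - r)) r (size nu).+1.
rewrite E in key; rewrite key; last first.
  - move=> i /andP[h1 h2]; apply: part_anti => //; lia.
  - lia.
rewrite big_distrr /=; apply: eq_big_nat => k /andP[hrk hkL].
have Hc : forall c, (part nu k.+1 <= c < part nu k)%N -> conjpart nu c.+1 = k.
  move=> c /andP[h1 h2].
  apply: count_sorted => //.
under eq_big_nat => c hc do rewrite (Hc c hc).
apply: geom_tel; apply/andP; split.
  by apply: part_anti => //; lia.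
by apply: part_anti => //; lia.
Qed.
End Row.

Lemma shift_sum (R : zmodType) (r N : nat) (F : nat -> R) :
  \sum_(r <= k < N) F k = \sum_(0 <= d < N - r) F (d + r).
Proof. by have := big_addn 0 N r xpredT F; rewrite add0n. Qed.

Lemma cond_sum (R : zmodType) (d L : nat) (F : nat -> R) : (d < L)%N ->
  \sum_(1 <= r < L.+1 | (d < L.+1 - r)%N) F r = \sum_(1 <= r < (L - d).+1) F r.
Proof.
move=> hd; rewrite (big_nat_widen _ _ _ _ _ (_ : (L - d).+1 <= L.+1)%N); last lia.
apply: eq_bigl => r /=; apply/idP/idP => h; lia.
Qed.

Section Key.
Variable R : comRingType.
Variables q t : R.

Lemma key_form (nu : seq nat) (L : nat) : sorted geq nu -> size nu = L ->
  (1 - q) * fpoly nu q t =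
  \sum_(0 <= d < L) t ^+ d * \sum_(1 <= r < (L - d).+1)
     (q ^+ (part nu r - part nu (r + d)%N) - q ^+ (part nu r - part nu (r + d)%N.+1)).
Proof.
move=> hs hL; rewrite /fpoly big_distrr /= hL.
rewrite (@eq_big_nat _ _ _ _ _ _ (fun r => \sum_(0 <= d < L | (d < L.+1 - r)%N)
   t ^+ d * (q ^+ (part nu r - part nu (r + d)%N) - q ^+ (part nu r - part nu (r + d)%N.+1)))); last first.
  move=> r hr; rewrite row_lemma //; last by rewrite hL.
  rewrite hL shift_sum (big_nat_widen _ _ _ _ _ (_ : (L.+1 - r <= L)%N)); last lia.
  apply: eq_bigr => d _; by rewrite addnK addnC.
under eq_bigr do rewrite big_mkcond.
rewrite exchange_big_nat /=; apply: eq_big_nat => d /andP[_ hd].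
by rewrite -big_mkcond /= -big_distrr /= cond_sum.
Qed.
End Key.
Lemma compl_sorted (m n : nat) (mu : seq nat) : sorted geq mu ->
  sorted geq (complement m n mu).
Proof.
move=> hs; apply/(sortedP 0%N) => i; rewrite size_mkseq => hi.
rewrite !nth_mkseq //; last lia.
apply: leq_sub2l; apply: part_anti => //; lia.
Qed.

Lemma compl_size m n mu : size (complement m n mu) = n.+1.
Proof. by rewrite size_mkseq. Qed.

Lemma compl_part m n mu i : (0 < i <= n.+2)%N ->
  part (complement m n mu) i =
  (m - (if (n.+2 - i)%N == 0%N then m else part mu (n.+2 - i)))%N.
Proof.
move=> /andP[h1 h2].
case: (ltnP i n.+2) => h3.
  rewrite /part nth_mkseq; last lia.
  have -> : (n.+2 - i.-1.+1 = n.+2 - i)%N by lia.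
  by have -> : (n.+2 - i == 0)%N = false by apply/eqP; lia.
have -> : i = n.+2 by lia.
by rewrite subnn eqxx subnn /part nth_default // size_mkseq.
Qed.

Theorem mainTheorem14 (R : fieldType) (m n : nat) (mu : seq nat)
  (hm : (1 <= m)%N) (hmu : is_partition mu) (hlen : size mu = n.+1)
  (hmu1 : (part mu 1 < m)%N) (q t : R) (hq : q != 1) :
  fpoly mu q t - fpoly (complement m n mu) q t =
  (1 - q)^-1 * \sum_(0 <= j < n.+1)
     t ^+ j * (q ^+ part (complement m n mu) (n.+1 - j)
               - q ^+ part mu (n.+1 - j)).
Proof.
have hs : sorted geq mu by case/andP: hmu.
have hq1 : 1 - q != 0 by rewrite subr_eq0 eq_sym.
apply: (mulfI hq1); rewrite mulrA divff // mul1r mulrBr.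
rewrite (key_form _ q t _ _ hs hlen) (key_form _ q t _ _ (@compl_sorted m n mu hs) (compl_size m n mu)).
rewrite -sumrB; apply: eq_big_nat => d /andP[_ hd]; rewrite -mulrBr; congr (_ * _).
pose P i := if i == 0%N then m else part mu i.
have hPp : forall i, (0 < i)%N -> part mu i = P i.
  by move=> i hi; rewrite /P; case: eqP => //; lia.
have hPa : forall i j, (i <= j)%N -> (P j <= P i)%N.
  move=> i j hij; rewrite /P; case: eqP => hj; case: eqP => hi; try lia.
  - apply: leq_trans (ltnW hmu1); apply: part_anti => //; lia.
  - apply: part_anti => //; lia.
have hPm : forall i, (P i <= m)%N by move=> i; have := hPa 0%N i (leq0n _).
have hpc : forall i, (0 < i <= n.+2)%N -> part (complement m n mu) i = (m - P (n.+2 - i))%N.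
  by move=> i hi; rewrite compl_part.
rewrite [X in _ - X = _]big_nat_rev /=.
rewrite [X in _ - X = _](@eq_big_nat _ _ _ _ _ _ (fun r => q ^+ (P r - P (r + d)%N) - q ^+ (P r.-1 - P (r + d)%N))); last first.
  move=> r /andP[h1 h2].
  rewrite !hpc; try lia.
  have -> : (n.+2 - (1 + (n.+1 - d).+1 - r.+1) = r + d)%N by lia.
  have -> : (n.+2 - (1 + (n.+1 - d).+1 - r.+1 + d) = r)%N by lia.
  have -> : (n.+2 - (1 + (n.+1 - d).+1 - r.+1 + d).+1 = r.-1)%N by lia.
  have a1 := hPa r (r + d)%N (leq_addr _ _).
  have a2 := hPa r.-1 (r + d)%N ltac:(lia).
  have b1 := hPm r. have b2 := hPm r.-1.
  congr (q ^+ _ - q ^+ _); lia.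
rewrite [X in X - _ = _](@eq_big_nat _ _ _ _ _ _ (fun r => q ^+ (P r - P (r + d)%N) - q ^+ (P r - P (r + d)%N.+1))); last first.
  by move=> r /andP[h1 h2]; rewrite !hPp //; lia.
rewrite -sumrB.
rewrite (@eq_big_nat _ _ _ _ _ _ (fun r => - q ^+ (P r - P (r + d)%N.+1) - - q ^+ (P r.-1 - P (r + d)%N))); last first.
  by move=> r _; ring.
rewrite (telescope_sumr_eq (fun r => - q ^+ (P r.-1 - P (r + d)%N))); last first.
- by move=> r _ /=; rewrite addSn.
- lia.
rewrite hpc; last lia.
have -> : (n.+2 - (n.+1 - d) = d.+1)%N by lia.
rewrite hPp; last lia.
have -> : ((n.+1 - d).+1.-1 = n.+1 - d)%N by [].
have -> : ((n.+1 - d).+1 + d = n.+2)%N by lia.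
have -> : P n.+2 = 0%N by rewrite /P /= part_out // hlen.
rewrite subn0 opprK addrC. by [].
Qed.
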